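(* Let $G$ be a subgroup of $\mathrm{V}(r,\mathbb R^*_+,\mathbb R)$ with $G\cap\mathrm{F}(r,\mathbb R^*_+,\mathbb R)=\mathrm{F}(r,\Lambda,A)=\mathrm{F}$. Let $a\in\mathrm{F}^\uparrow$ with $\mathrm{supp}(a)=(0,r)$, $\alpha_0\in(0,r)\cap A$, $\alpha_k=(\alpha_0)a^k$, and $b\in\mathrm{F}^\uparrow$ with $\mathrm{supp}(b)=(\alpha_0,\alpha_1)$. Then $C_G(a)=C_{\mathrm F}(a)$ and $C_G(\{a^{-k}ba^k\mid k\in\mathbb Z\})=C_{\mathrm F}(\{a^{-k}ba^k\mid k\in\mathbb Z\})$.
   Context: Admissible triple $(r,\Lambda,A)$: $r>0$, $\Lambda\le\mathbb R^*_+$ nontrivial, $A\subseteq\mathbb R$ additive subgroup with $r\in A$, $\Lambda A\subseteq A$. $\mathrm{V}(r,\Lambda,A)$ is the group of bijections of $[0,r)$ that are piecewise affine with finitely many cuts and singular points, right-continuous everywhere, slopes in $\Lambda$, cut/singular points and their images in $A$; $\mathrm{F}(r,\Lambda,A)$ is its subgroup of elements continuous in the usual topology. Maps act on the right. $\mathrm{F}^\uparrow=\{x\in\mathrm{F}\mid(t)x\ge t\ \forall t\}$; $\mathrm{supp}$ is the set of non-fixed points; $C_G(\cdot)$ denotes centralizer in $G$. *)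

(* Defs.v *)
From Stdlib Require Import Reals Lra ZArith.
Open Scope R_scope.

(* Elements of V(r,Lambda,A) are represented as functions R -> R that are the
   identity outside [0,r).  Maps act on the right: (t)(fg) = g (f t). *)

Definition in_I (r t : R) : Prop := 0 <= t < r.

Definition mult_subgroup (Lam : R -> Prop) : Prop :=
  (forall x, Lam x -> 0 < x) /\ Lam 1 /\
  (forall x y, Lam x -> Lam y -> Lam (x * y)) /\
  (forall x, Lam x -> Lam (/ x)).

Definition nontrivial (Lam : R -> Prop) : Prop := exists x, Lam x /\ x <> 1.

Definition add_subgroup (A : R -> Prop) : Prop :=
  A 0 /\ (forall x y, A x -> A y -> A (x + y)) /\ (forall x, A x -> A (- x)).

Definition admissible (r : R) (Lam A : R -> Prop) : Prop :=
  0 < r /\ mult_subgroup Lam /\ nontrivial Lam /\ add_subgroup A /\ A r /\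
  (forall l x, Lam l -> A x -> A (l * x)).

Definition bij_I (r : R) (f : R -> R) : Prop :=
  (forall t, ~ in_I r t -> f t = t) /\
  (forall t, in_I r t -> in_I r (f t)) /\
  (forall y, in_I r y -> exists t, in_I r t /\ f t = y) /\
  (forall s t, in_I r s -> in_I r t -> f s = f t -> s = t).

(* finitely many cut/singular points x_0 = 0 < x_1 < ... < x_n = r, all in A,
   with images in A; affine with slope in Lam on each [x_i, x_{i+1})
   (hence right-continuous everywhere). *)
Definition pw_affine (r : R) (Lam A : R -> Prop) (f : R -> R) : Prop :=
  exists (n : nat) (x lam c : nat -> R),
    x 0%nat = 0 /\ x n = r /\
    (forall i, (i < n)%nat -> x i < x (S i)) /\
    (forall i, (i <= n)%nat -> A (x i)) /\
    (forall i, (i < n)%nat -> A (f (x i))) /\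
    (forall i, (i < n)%nat -> Lam (lam i)) /\
    (forall i t, (i < n)%nat -> x i <= t < x (S i) -> f t = lam i * t + c i).

Definition inV (r : R) (Lam A : R -> Prop) (f : R -> R) : Prop :=
  bij_I r f /\ pw_affine r Lam A f.

Definition cont_I (r : R) (f : R -> R) : Prop :=
  forall t, in_I r t -> forall eps, 0 < eps -> exists delta, 0 < delta /\
    forall s, in_I r s -> Rabs (s - t) < delta -> Rabs (f s - f t) < eps.

Definition inF (r : R) (Lam A : R -> Prop) (f : R -> R) : Prop :=
  inV r Lam A f /\ cont_I r f.

Definition posR : R -> Prop := fun x => 0 < x.
Definition allR : R -> Prop := fun _ => True.

Definition subgroupV (r : R) (G : (R -> R) -> Prop) : Prop :=
  (forall g, G g -> inV r posR allR g) /\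
  G (fun t => t) /\
  (forall g h, G g -> G h -> G (fun t => h (g t))) /\
  (forall g, G g -> exists h, G h /\ (forall t, h (g t) = t) /\ (forall t, g (h t) = t)).

Definition Fup (r : R) (Lam A : R -> Prop) (f : R -> R) : Prop :=
  inF r Lam A f /\ (forall t, in_I r t -> t <= f t).

Definition supp_eq (f : R -> R) (P : R -> Prop) : Prop :=
  forall t, f t <> t <-> P t.

Definition commute (f g : R -> R) : Prop := forall t, f (g t) = g (f t).

(* h = a^{-k} b a^k for some k in Z (right action); with inverses cleared:
   k = m >= 0 :  a^m h = b a^m,  i.e.  h (a^m t) = a^m (b t);
   k = -m <= 0:  h a^m = a^m b,  i.e.  a^m (h t) = b (a^m t). *)
Definition conj_set (a b : R -> R) (h : R -> R) : Prop :=
  exists m : nat,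
    (forall t, h (Nat.iter m a t) = Nat.iter m a (b t)) \/
    (forall t, Nat.iter m a (h t) = b (Nat.iter m a t)).

(* Main.v *)
Require Import Defs.
From Stdlib Require Import Reals Lra Lia Classical.
Open Scope R_scope.

Ltac rabs := unfold Rabs in *; repeat match goal with |- context [Rcase_abs ?x] => destruct (Rcase_abs x) | H : context [Rcase_abs ?x] |- _ => destruct (Rcase_abs x) end; lra.



Definition PW (r : R) (f : R -> R) (n : nat) (x lam c : nat -> R) : Prop :=
  x 0%nat = 0 /\ x n = r /\ (forall i, (i < n)%nat -> x i < x (S i)) /\
  (forall i, (i < n)%nat -> 0 < lam i) /\
  (forall i t, (i < n)%nat -> x i <= t < x (S i) -> f t = lam i * t + c i).

Definition LC (f : R -> R) (p : R) : Prop :=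
  forall eps, 0 < eps -> exists d, 0 < d /\ forall s, p - d < s < p -> Rabs (f s - f p) < eps.
Definition RC (f : R -> R) (p : R) : Prop :=
  forall eps, 0 < eps -> exists d, 0 < d /\ forall s, p <= s < p + d -> Rabs (f s - f p) < eps.

Lemma pw_of (r : R) (Lam A : R -> Prop) f :
  (forall l, Lam l -> 0 < l) -> pw_affine r Lam A f -> exists n x lam c, PW r f n x lam c.
Proof.
  intros HL (n & x & lam & c & H0 & Hn & Hx & _ & _ & Hl & Hf).
  exists n, x, lam, c; repeat split; auto.
Qed.

Lemma lin_small l e u : 0 < l -> 0 < e -> 0 <= u <= e / (2 * l) -> l * u <= e / 2.
Proof.
  intros Hl He Hu.
  assert (l * u <= l * (e / (2 * l))) by (apply Rmult_le_compat_l; lra).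
  replace (l * (e / (2 * l))) with (e / 2) in H by (field; lra). lra.
Qed.

Lemma piece r f n x lam c q : PW r f n x lam c -> 0 <= q < r ->
  exists i, (i < n)%nat /\ x i <= q < x (S i).
Proof.
  intros (H0 & Hn & Hx & _ & _) Hq.
  assert (forall k, (k <= n)%nat -> q < x k -> exists i, (i < k)%nat /\ x i <= q < x (S i)).
  { induction k; intros Hk Hqk.
    - lra.
    - destruct (Rlt_le_dec q (x k)).
      + destruct (IHk ltac:(lia) r0) as (i & ? & ?). exists i; split; [lia|auto].
      + exists k; split; [lia|lra]. }
  destruct (H n ltac:(lia) ltac:(lra)) as (i & ? & ?); eauto.
Qed.

Lemma xmono r f n x lam c : PW r f n x lam c -> forall i j, (i <= j)%nat -> (j <= n)%nat -> x i <= x j.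
Proof.
  intros (H0 & Hn & Hx & _ & _) i j Hij. induction Hij; intros Hj.
  - lra.
  - specialize (IHHij ltac:(lia)). specialize (Hx m ltac:(lia)). lra.
Qed.

Lemma rc_pw r f n x lam c q : PW r f n x lam c -> 0 <= q < r -> RC f q.
Proof.
  intros HP Hq. destruct (piece _ _ _ _ _ _ _ HP Hq) as (i & Hi & Hiq).
  destruct HP as (H0 & Hn & Hx & Hl & Hf).
  intros e He. specialize (Hl i Hi).
  exists (Rmin (x (S i) - q) (e / (2 * lam i))). split.
  { apply Rmin_pos; [lra|]. apply Rdiv_lt_0_compat; lra. }
  intros s Hs.
  assert (Hm1 := Rmin_l (x (S i) - q) (e / (2 * lam i))).
  assert (Hm2 := Rmin_r (x (S i) - q) (e / (2 * lam i))).
  rewrite (Hf i s Hi ltac:(lra)), (Hf i q Hi ltac:(lra)).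
  assert (lam i * (s - q) <= e / 2) by (apply lin_small; lra).
  assert (lam i * s - lam i * q = lam i * (s - q)) by ring.
  assert (0 <= lam i * (s - q)) by (apply Rmult_le_pos; lra).
  rabs.
Qed.

Lemma lc_noncut r f n x lam c q : PW r f n x lam c -> 0 < q < r -> ~ LC f q ->
  exists j, (j < n)%nat /\ q = x j.
Proof.
  intros HP Hq HnLC. destruct (piece r f n x lam c q HP ltac:(split; lra)) as (i & Hi & Hiq).
  destruct (Req_dec (x i) q) as [E|E]. { exists i; split; auto. }
  exfalso; apply HnLC.
  destruct HP as (H0 & Hn & Hx & Hl & Hf).
  intros e He. specialize (Hl i Hi).
  exists (Rmin (q - x i) (e / (2 * lam i))). split.
  { apply Rmin_pos; [lra|]. apply Rdiv_lt_0_compat; lra. }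
  intros s Hs.
  assert (Hm1 := Rmin_l (q - x i) (e / (2 * lam i))).
  assert (Hm2 := Rmin_r (q - x i) (e / (2 * lam i))).
  rewrite (Hf i s Hi ltac:(lra)), (Hf i q Hi ltac:(lra)).
  assert (lam i * (q - s) <= e / 2) by (apply lin_small; lra).
  assert (lam i * q - lam i * s = lam i * (q - s)) by ring.
  assert (0 <= lam i * (q - s)) by (apply Rmult_le_pos; lra).
  rabs.
Qed.

Lemma cont_of r f : (forall q, 0 <= q < r -> RC f q) -> (forall q, 0 < q < r -> LC f q) -> cont_I r f.
Proof.
  intros HR HL t Ht e He. unfold in_I in Ht.
  destruct (HR t Ht e He) as (d1 & Hd1 & H1).
  destruct (Req_dec t 0) as [E|E].
  - exists d1; split; auto. intros s Hs Hst. unfold in_I in Hs. apply H1. rabs.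
  - destruct (HL t ltac:(lra) e He) as (d2 & Hd2 & H2).
    exists (Rmin d1 d2); split. { apply Rmin_pos; lra. }
    assert (Hm1 := Rmin_l d1 d2). assert (Hm2 := Rmin_r d1 d2).
    intros s Hs Hst. destruct (Rle_dec t s).
    + apply H1. rabs.
    + apply H2. rabs.
Qed.

Lemma junction f t xi l m : LC f t -> xi < t -> 0 < l ->
  (forall s, xi <= s < t -> f s = l * s + m) -> f t = l * t + m.
Proof.
  intros HL Hxt Hl Hf.
  destruct (Req_dec (f t) (l * t + m)) as [E|E]; auto. exfalso.
  set (e := Rabs (f t - (l * t + m))).
  assert (He : 0 < e) by (unfold e; apply Rabs_pos_lt; lra).
  destruct (HL (e / 2) ltac:(lra)) as (d & Hd & H).
  set (rho := Rmin (d / 2) (Rmin ((t - xi) / 2) (e / (2 * l)))).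
  assert (Hr1 : rho <= d / 2) by apply Rmin_l.
  assert (Hr2 : rho <= (t - xi) / 2) by (eapply Rle_trans; [apply Rmin_r|apply Rmin_l]).
  assert (Hr3 : rho <= e / (2 * l)) by (eapply Rle_trans; [apply Rmin_r|apply Rmin_r]).
  assert (Hr0 : 0 < rho).
  { unfold rho. repeat apply Rmin_pos; try lra. apply Rdiv_lt_0_compat; lra. }
  specialize (H (t - rho) ltac:(lra)).
  rewrite (Hf (t - rho) ltac:(lra)) in H.
  assert (l * rho <= e / 2) by (apply lin_small; lra).
  assert (e <= Rabs (f t - (l * (t - rho) + m)) + l * rho).
  { unfold e. assert (l * (t - rho) = l * t - l * rho) by ring. assert (0 <= l * rho) by (apply Rmult_le_pos; lra). rabs. }
  rewrite Rabs_minus_sym in H. lra.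
Qed.

Lemma mono_pw r f n x lam c u v : PW r f n x lam c -> 0 <= u -> v <= r ->
  (forall t, u < t < v -> LC f t) ->
  forall s t, u <= s -> s < t -> t < v -> f s < f t.
Proof.
  intros HP Hu Hv HLC.
  assert (HP' := HP). destruct HP' as (H0 & Hn & Hx & Hl & Hf).
  assert (K : forall i, (i <= n)%nat -> forall s t, u <= s -> s < t -> t < v -> t <= x i -> f s < f t).
  { induction i; intros Hi s t Hs Hst Htv Hti.
    - lra.
    - assert (Hin : (i < n)%nat) by lia.
      assert (sub : forall s', u <= s' -> x i <= s' -> s' < t -> x i < t -> f s' < f t).
      { intros s' Hs1 Hs2 Hs3 Hs4. specialize (Hl i Hin).
        rewrite (Hf i s' Hin ltac:(lra)).
        destruct (Rlt_le_dec t (x (S i))).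
        - rewrite (Hf i t Hin ltac:(lra)).
          assert (lam i * s' < lam i * t) by (apply Rmult_lt_compat_l; lra). lra.
        - assert (E : t = x (S i)) by lra.
          rewrite (junction f t (x i) (lam i) (c i)); auto.
          + assert (lam i * s' < lam i * t) by (apply Rmult_lt_compat_l; lra). lra.
          + apply HLC; lra.
          + intros s0 Hs0. apply Hf; auto. lra. }
      destruct (Rle_dec t (x i)).
      + apply IHi; auto; lia.
      + destruct (Rle_dec (x i) s).
        * apply sub; lra.
        * apply Rlt_trans with (f (x i)).
          -- apply IHi; try lia; lra.
          -- apply sub; lra. }
  intros s t Hs Hst Htv. apply (K n); auto. lra.
Qed.

Lemma lc_of_cont r f p : cont_I r f -> 0 < p < r -> LC f p.
Proof.
  intros Hc Hp e He. destruct (Hc p ltac:(unfold in_I; lra) e He) as (d & Hd & H).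
  exists (Rmin d p); split. { apply Rmin_pos; lra. }
  assert (Hm1 := Rmin_l d p). assert (Hm2 := Rmin_r d p).
  intros s Hs. apply H. unfold in_I; lra. rabs.
Qed.

Lemma maxnat (P : nat -> Prop) n j : P j -> (j < n)%nat ->
  exists m, P m /\ (m < n)%nat /\ forall k, P k -> (k < n)%nat -> (k <= m)%nat.
Proof.
  revert j. induction n; intros j Hj Hjn. lia.
  destruct (classic (P n)) as [Hn|Hn].
  - exists n; repeat split; auto. intros; lia.
  - assert (j <> n) by (intro; subst; tauto).
    destruct (IHn j Hj ltac:(lia)) as (m & Hm & Hmn & Hmax).
    exists m; repeat split; auto. intros k Hk Hkn.
    assert (k <> n) by (intro; subst; tauto). apply Hmax; auto. lia.
Qed.


Definition LCI (f : R -> R) (p : R) : Prop :=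
  forall d1, 0 < d1 -> exists d2, 0 < d2 /\ forall s, p - d2 < s < p -> f p - d1 < f s < f p.

Definition Nice (r : R) (f : R -> R) : Prop :=
  (forall t, in_I r t -> in_I r (f t)) /\
  (forall t, 0 < t < r -> 0 < f t < r) /\
  (forall s t, in_I r s -> in_I r t -> s < t -> f s < f t) /\
  (forall p, 0 < p < r -> LCI f p).

Lemma nice_le r f s t : Nice r f -> in_I r s -> in_I r t -> s <= t -> f s <= f t.
Proof.
  intros (_ & _ & Hm & _) Hs Ht Hst. destruct (Req_dec s t). subst; lra.
  left; apply Hm; auto; lra.
Qed.

Lemma nice_rev r f s t : Nice r f -> in_I r s -> in_I r t -> f s < f t -> s < t.
Proof.
  intros HN Hs Ht H. destruct (Rlt_le_dec s t); auto.
  assert (f t <= f s) by (apply nice_le with r; auto). lra.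
Qed.

Lemma nice_comp r f g : Nice r f -> Nice r g -> Nice r (fun t => g (f t)).
Proof.
  intros (F1 & F2 & F3 & F4) (G1 & G2 & G3 & G4). split; [|split; [|split]].
  - intros; apply G1, F1; auto.
  - intros; apply G2, F2; auto.
  - intros; apply G3; auto.
  - intros p Hp d1 Hd1.
    destruct (G4 (f p) (F2 p Hp) d1 Hd1) as (d & Hd & Hg).
    destruct (F4 p Hp d Hd) as (d2 & Hd2 & Hf).
    exists d2; split; [auto|]. intros s Hs. apply Hg; auto.
Qed.

Lemma nice_id r : Nice r (fun t => t).
Proof.
  split; [|split; [|split]]; auto; try (intros; lra).
  intros p Hp d1 Hd1. exists d1; split; auto; intros; lra.
Qed.

Lemma nice_iter r f m : Nice r f -> Nice r (Nat.iter m f).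
Proof.
  intros HN. induction m.
  - apply nice_id.
  - exact (nice_comp r (Nat.iter m f) f IHm HN).
Qed.

Lemma iter_succ_r (f : R -> R) m y : Nat.iter (S m) f y = Nat.iter m f (f y).
Proof. induction m; simpl; auto. simpl in IHm. rewrite IHm. auto. Qed.

Lemma iter_inv (f h : R -> R) m : (forall t, f (h t) = t) -> forall t, Nat.iter m f (Nat.iter m h t) = t.
Proof.
  intros H. induction m; intros t; [reflexivity|].
  change (Nat.iter (S m) f (h (Nat.iter m h t)) = t). rewrite iter_succ_r, H. apply IHm.
Qed.

Lemma nice_of_F r (Lam A : R -> Prop) f : (forall l, Lam l -> 0 < l) -> Fup r Lam A f -> Nice r f.
Proof.
  intros HL ((((B1 & B2 & B3 & B4) & Hpw) & Hc) & Hup).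
  destruct (pw_of r Lam A f HL Hpw) as (n & x & lam & c & HP).
  assert (Hm : forall s t, in_I r s -> in_I r t -> s < t -> f s < f t).
  { intros s t Hs Ht Hst. unfold in_I in *.
    apply (mono_pw r f n x lam c 0 r HP); try lra.
    intros; apply lc_of_cont with r; auto. }
  split; [|split; [|split]].
  - apply B2.
  - intros t Ht. specialize (Hup t ltac:(unfold in_I; lra)). destruct (B2 t ltac:(unfold in_I; lra)). lra.
  - apply Hm.
  - intros p Hp d1 Hd1. destruct (Hc p ltac:(unfold in_I; lra) d1 Hd1) as (d & Hd & H).
    exists (Rmin d p); split. { apply Rmin_pos; lra. }
    assert (Hm1 := Rmin_l d p). assert (Hm2 := Rmin_r d p).
    intros s Hs. assert (in_I r s) by (unfold in_I; lra).
    specialize (H s H0 ltac:(rabs)).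
    assert (f s < f p) by (apply Hm; auto; unfold in_I; lra).
    rabs.
Qed.

Lemma nice_inv r f h : Nice r f -> f 0 = 0 -> (forall y, in_I r y -> exists t, in_I r t /\ f t = y) ->
  (forall t, h (f t) = t) -> (forall t, f (h t) = t) -> Nice r h.
Proof.
  intros HN H0 Hsurj Hhf Hfh.
  assert (HI : forall y, in_I r y -> in_I r (h y)).
  { intros y Hy. destruct (Hsurj y Hy) as (t & Ht & <-). rewrite Hhf; auto. }
  assert (HP : forall y, 0 < y < r -> 0 < h y < r).
  { intros y Hy. assert (in_I r (h y)) by (apply HI; unfold in_I; lra). unfold in_I in H.
    destruct (Req_dec (h y) 0) as [E|E].
    - rewrite <- (Hfh y), E, H0 in Hy. lra.
    - lra. }
  assert (Hm : forall s t, in_I r s -> in_I r t -> s < t -> h s < h t).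
  { intros s t Hs Ht Hst. apply (nice_rev r f); auto. rewrite !Hfh; auto. }
  split; [|split; [|split]]; auto.
  intros p Hp d1 Hd1.
  set (x := h p). assert (Hx : 0 < x < r) by (apply HP; auto).
  set (w := Rmax (x - d1 / 2) (x / 2)).
  assert (Hw1 : x - d1 / 2 <= w) by apply Rmax_l. assert (Hw2 : x / 2 <= w) by apply Rmax_r.
  assert (Hw3 : w < x) by (unfold w; apply Rmax_lub_lt; lra).
  assert (HwI : in_I r w) by (unfold in_I; lra).
  assert (Hfw : f w < f x) by (destruct HN as (_ & _ & Hm' & _); apply Hm'; auto; unfold in_I; lra).
  assert (Hfx : f x = p) by (apply Hfh).
  assert (Hfw0 : in_I r (f w)) by (destruct HN as (HN1 & _); auto).
  exists (p - f w); split. lra.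
  intros s Hs. unfold in_I in Hfw0.
  assert (HsI : in_I r s) by (unfold in_I; lra).
  fold x. split.
  - assert (w < h s). { apply (nice_rev r f); auto. rewrite Hfh. lra. } lra.
  - apply (nice_rev r f); auto. unfold in_I; lra. rewrite Hfh, Hfx. lra.
Qed.

Lemma inv_cont r c y e : Nice r c -> in_I r y -> 0 < e ->
  exists eta, 0 < eta /\ forall z, in_I r z -> Rabs (c z - c y) < eta -> Rabs (z - y) < e.
Proof.
  intros HN Hy He. unfold in_I in Hy.
  pose proof HN as (N1 & N2 & N3 & N4).
  assert (E1 : exists e1, 0 < e1 /\ (y + e < r -> e1 <= c (y + e) - c y)).
  { destruct (Rlt_dec (y + e) r).
    - exists (c (y + e) - c y). split; [|lra]. assert (c y < c (y + e)) by (apply N3; unfold in_I; lra). lra.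
    - exists 1; split; lra. }
  assert (E2 : exists e2, 0 < e2 /\ (0 <= y - e -> e2 <= c y - c (y - e))).
  { destruct (Rle_dec 0 (y - e)).
    - exists (c y - c (y - e)). split; [|lra]. assert (c (y - e) < c y) by (apply N3; unfold in_I; lra). lra.
    - exists 1; split; lra. }
  destruct E1 as (e1 & He1 & H1). destruct E2 as (e2 & He2 & H2).
  exists (Rmin e1 e2); split. apply Rmin_pos; lra.
  assert (Hm1 := Rmin_l e1 e2). assert (Hm2 := Rmin_r e1 e2).
  intros z Hz Hcz. unfold in_I in Hz.
  destruct (Rlt_le_dec (Rabs (z - y)) e) as [|Hge]; auto. exfalso.
  destruct (Rle_dec (y + e) z).
  - assert (c (y + e) <= c z) by (apply (nice_le r c); [exact HN|unfold in_I; lra|unfold in_I; lra|lra]).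
    specialize (H1 ltac:(lra)). rabs.
  - assert (z <= y - e) by rabs.
    assert (c z <= c (y - e)) by (apply (nice_le r c); [exact HN|unfold in_I; lra|unfold in_I; lra|lra]).
    specialize (H2 ltac:(lra)). rabs.
Qed.


Definition CL (r : R) (c : R -> R) (lo hi : R) : Prop :=
  Nice r c /\ (forall t, in_I r t -> t <= c t) /\
  (forall t, in_I r t -> (c t <> t <-> lo < t < hi)) /\ 0 <= lo /\ lo < hi /\ hi <= r.

Lemma nice_inj r c s t : Nice r c -> in_I r s -> in_I r t -> c s = c t -> s = t.
Proof.
  intros HN Hs Ht E. destruct (Rtotal_order s t) as [H|[H|H]]; auto.
  - apply (proj1 (proj2 (proj2 HN))) in H; auto. lra.
  - apply (proj1 (proj2 (proj2 HN))) in H; auto. lra.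
Qed.

Lemma CL_prop r c lo hi p : CL r c lo hi -> lo < p < hi -> p < c p /\ lo < c p < hi.
Proof.
  intros (HN & Hup & Hs & Hlo & Hlh & Hhi) Hp.
  assert (HpI : in_I r p) by (unfold in_I; lra).
  assert (Hne : c p <> p) by (apply Hs; auto).
  assert (Hcp : in_I r (c p)) by (apply HN; auto).
  specialize (Hup p HpI). split. lra.
  apply Hs; auto. intro E. apply Hne. apply (nice_inj r c); auto.
Qed.

Lemma transfer r c g p : Nice r c -> bij_I r g -> (forall t, g (c t) = c (g t)) -> 0 < p < r ->
  LC g (c p) -> LC g p.
Proof.
  intros HN (G1 & G2 & G3 & G4) Hcom Hp HL e He.
  assert (HgpI : in_I r (g p)) by (apply G2; unfold in_I; lra).
  destruct (inv_cont r c (g p) e HN HgpI He) as (eta & Heta & Hinv).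
  destruct (HL eta Heta) as (d1 & Hd1 & H1).
  destruct (proj2 (proj2 (proj2 HN)) p Hp d1 Hd1) as (d2 & Hd2 & H2).
  exists (Rmin d2 p); split. apply Rmin_pos; lra.
  assert (Hm1 := Rmin_l d2 p). assert (Hm2 := Rmin_r d2 p).
  intros s Hs. assert (HsI : in_I r s) by (unfold in_I; lra).
  apply Hinv. apply G2; auto.
  rewrite <- !Hcom. apply H1. apply H2. lra.
Qed.

Lemma local r g n x lam cc c lo hi : PW r g n x lam cc -> bij_I r g -> CL r c lo hi ->
  (forall t, g (c t) = c (g t)) -> forall q, lo < q < hi -> LC g q.
Proof.
  intros HP Hb HC Hcom q Hq.
  assert (HC' := HC). destruct HC' as (HN & _ & _ & Hlo & Hlh & Hhi).
  apply NNPP. intro HnL.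
  destruct (lc_noncut r g n x lam cc q HP ltac:(split; lra) HnL) as (j & Hj & Eq).
  set (P := fun k => (k < n)%nat /\ lo < x k < hi /\ ~ LC g (x k)).
  destruct (maxnat P n j) as (m & Hm & Hmn & Hmax).
  { unfold P. rewrite <- Eq. split; auto. }
  auto.
  destruct Hm as (_ & Hxm & HnLm).
  destruct (CL_prop r c lo hi (x m) HC Hxm) as (Hlt & Hin).
  assert (HnLc : ~ LC g (c (x m))).
  { intro HL. apply HnLm. apply (transfer r c); auto. lra. }
  destruct (lc_noncut r g n x lam cc (c (x m)) HP ltac:(split; lra) HnLc) as (j' & Hj' & Eq').
  assert (Pj' : P j') by (unfold P; rewrite <- Eq'; auto).
  specialize (Hmax j' Pj' Hj').
  assert (x j' <= x m) by (apply (xmono r g n x lam cc); auto; lia).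
  lra.
Qed.

Lemma supp_into r g c lo hi : bij_I r g -> CL r c lo hi -> (forall t, g (c t) = c (g t)) ->
  forall t, lo < t < hi -> lo < g t < hi.
Proof.
  intros (G1 & G2 & G3 & G4) (HN & Hup & Hs & Hlo & Hlh & Hhi) Hcom t Ht.
  assert (HtI : in_I r t) by (unfold in_I; lra).
  assert (Hne : c t <> t) by (apply Hs; auto).
  apply Hs. apply G2; auto. rewrite <- Hcom. intro E. apply Hne.
  apply G4; auto. apply HN; auto.
Qed.

Lemma supp_onto r g c lo hi : bij_I r g -> CL r c lo hi -> (forall t, g (c t) = c (g t)) ->
  forall y, lo < y < hi -> exists t, lo < t < hi /\ g t = y.
Proof.
  intros (G1 & G2 & G3 & G4) (HN & Hup & Hs & Hlo & Hlh & Hhi) Hcom y Hy.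
  assert (HyI : in_I r y) by (unfold in_I; lra).
  destruct (G3 y HyI) as (t & HtI & <-). exists t; split; auto.
  apply Hs; auto. intro E.
  assert (c (g t) = g t) by (rewrite <- Hcom, E; auto).
  revert H. apply Hs; auto.
Qed.

Lemma boundary r g n x lam cc c1 c2 lo beta hi : PW r g n x lam cc -> bij_I r g ->
  CL r c1 lo beta -> CL r c2 beta hi ->
  (forall t, g (c1 t) = c1 (g t)) -> (forall t, g (c2 t) = c2 (g t)) -> LC g beta.
Proof.
  intros HP Hb H1 H2 Hc1 Hc2.
  assert (H1' := H1). destruct H1' as (_ & _ & _ & Hlo & Hlb & _).
  assert (H2' := H2). destruct H2' as (_ & _ & _ & _ & Hbh & Hhi).
  assert (L1 := local r g n x lam cc c1 lo beta HP Hb H1 Hc1).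
  assert (L2 := local r g n x lam cc c2 beta hi HP Hb H2 Hc2).
  assert (M1 : forall s t, lo < s -> s < t -> t < beta -> g s < g t).
  { intros s t Hs Hst Ht. apply (mono_pw r g n x lam cc lo beta HP); auto; lra. }
  assert (M2 : forall s t, beta < s -> s < t -> t < hi -> g s < g t).
  { intros s t Hs Hst Ht. apply (mono_pw r g n x lam cc beta hi HP); auto; lra. }
  assert (I1 := supp_into r g c1 lo beta Hb H1 Hc1).
  assert (I2 := supp_into r g c2 beta hi Hb H2 Hc2).
  assert (O1 := supp_onto r g c1 lo beta Hb H1 Hc1).
  assert (O2 := supp_onto r g c2 beta hi Hb H2 Hc2).
  assert (Hfix : g beta = beta).
  { destruct (Req_dec (g beta) beta) as [|E]; auto. exfalso.
    set (e := Rabs (g beta - beta)). assert (He : 0 < e) by (apply Rabs_pos_lt; lra).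
    set (eps := Rmin (e / 2) ((hi - beta) / 2)).
    assert (Hq1 : eps <= e / 2) by apply Rmin_l. assert (Hq2 : eps <= (hi - beta) / 2) by apply Rmin_r.
    assert (Hq0 : 0 < eps) by (apply Rmin_pos; lra).
    destruct (O2 (beta + eps) ltac:(split; lra)) as (t & Ht & Hgt).
    destruct (rc_pw r g n x lam cc beta HP ltac:(split; lra) eps Hq0) as (d & Hd & Hrc).
    set (s := Rmin (beta + d / 2) ((beta + t) / 2)).
    assert (Hs1 : s <= beta + d / 2) by apply Rmin_l. assert (Hs2 : s <= (beta + t) / 2) by apply Rmin_r.
    assert (Hs0 : beta < s) by (apply Rmin_glb_lt; lra).
    specialize (Hrc s ltac:(split; lra)).
    assert (g s < g t) by (apply M2; lra).
    assert (beta < g s) by (apply I2; lra).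
    unfold e in *. rabs. }
  intros e He.
  set (y := Rmax (beta - e / 2) ((lo + beta) / 2)).
  assert (Hy1 : beta - e / 2 <= y) by apply Rmax_l. assert (Hy2 : (lo + beta) / 2 <= y) by apply Rmax_r.
  assert (Hy3 : y < beta) by (apply Rmax_lub_lt; lra).
  destruct (O1 y ltac:(split; lra)) as (t & Ht & Hgt).
  exists (beta - t); split. lra.
  intros s Hs. rewrite Hfix.
  assert (g t < g s) by (apply M1; lra).
  assert (g s < beta) by (apply I1; lra).
  rabs.
Qed.


Lemma CJ r P Q b al0 al1 : Nice r P -> Nice r Q -> Nice r b ->
  (forall t, P (Q t) = t) -> (forall t, Q (P t) = t) ->
  (forall t, in_I r t -> t <= b t) -> (forall t, b t <> t <-> al0 < t < al1) ->
  in_I r al0 -> in_I r al1 -> al0 < al1 ->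
  CL r (fun t => P (b (Q t))) (P al0) (P al1).
Proof.
  intros HP HQ Hb PQ QP Hbup Hbs H0 H1 H01.
  split; [|split; [|split; [|split; [|split]]]].
  - exact (nice_comp r Q (fun u => P (b u)) HQ (nice_comp r b P Hb HP)).
  - intros t Ht. assert (HqI : in_I r (Q t)) by (apply HQ; auto).
    rewrite <- (PQ t) at 1. apply (nice_le r P); auto. apply Hb; auto.
  - intros t Ht. assert (HqI : in_I r (Q t)) by (apply HQ; auto).
    assert (E : P (b (Q t)) <> t <-> b (Q t) <> Q t).
    { split; intros H E.
      - apply H. rewrite E. apply PQ.
      - apply H. rewrite <- (QP (b (Q t))), E. auto. }
    rewrite E, Hbs. split; intros [Ha Hb'].
    + split.
      * rewrite <- (PQ t). apply HP; auto.
      * rewrite <- (PQ t) at 1. apply HP; auto.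
    + split.
      * apply (nice_rev r P); auto. rewrite PQ; auto.
      * apply (nice_rev r P); auto. rewrite PQ; auto.
  - destruct (proj1 HP al0 H0). lra.
  - apply HP; auto.
  - destruct (proj1 HP al1 H1). unfold in_I in *. lra.
Qed.

Lemma cross_up (s : nat -> R) q K : s 0%nat <= q -> q < s K -> exists m, s m <= q < s (S m).
Proof.
  induction K; intros H0 HK. lra.
  destruct (Rlt_le_dec q (s K)). apply IHK; auto. exists K; split; auto.
Qed.

Lemma cross_dn (s : nat -> R) q K : q < s 0%nat -> s K <= q -> exists m, s (S m) <= q < s m.
Proof.
  induction K; intros H0 HK. lra.
  destruct (Rle_lt_dec (s K) q). apply IHK; auto. exists K; split; auto.
Qed.

Lemma part2 r a ainv b al0 g n x lam c :
  PW r g n x lam c -> bij_I r g -> Nice r a -> Nice r ainv -> Nice r b ->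
  (forall t, ainv (a t) = t) -> (forall t, a (ainv t) = t) ->
  (forall t, in_I r t -> t <= a t) -> (forall t, a t <> t <-> 0 < t < r) ->
  (forall t, in_I r t -> t <= b t) -> (forall t, b t <> t <-> al0 < t < a al0) ->
  0 < al0 < r ->
  (forall h, conj_set a b h -> commute g h) ->
  forall q, 0 < q < r -> LC g q.
Proof.
  intros HP Hb Na Ni Nb IA AI Aup Asupp Bup Bsupp Hal Hcom.
  set (U := fun m => Nat.iter m a al0).
  set (D := fun m => Nat.iter m ainv al0).
  assert (Hal0 : in_I r al0) by (unfold in_I; lra).
  assert (Hal1 : 0 < a al0 < r) by (apply Na; auto).
  assert (Hal01 : al0 < a al0).
  { assert (a al0 <> al0) by (apply Asupp; auto). specialize (Aup al0 Hal0). lra. }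
  assert (UI : forall m, 0 < U m < r) by (intros m; apply (nice_iter r a m Na); auto).
  assert (DI : forall m, 0 < D m < r) by (intros m; apply (nice_iter r ainv m Ni); auto).
  assert (CLup : forall m, CL r (fun t => Nat.iter m a (b (Nat.iter m ainv t))) (U m) (U (S m))).
  { intros m. replace (U (S m)) with (Nat.iter m a (a al0)).
    apply CJ; auto using nice_iter, iter_inv.
    unfold in_I; lra. unfold U. symmetry. apply iter_succ_r. }
  assert (COup : forall m t, g (Nat.iter m a (b (Nat.iter m ainv t))) = Nat.iter m a (b (Nat.iter m ainv (g t)))).
  { intros m. apply (Hcom (fun t => Nat.iter m a (b (Nat.iter m ainv t)))).
    exists m; left. intros t. rewrite iter_inv; auto. }
  assert (CLdn : forall m, CL r (fun t => Nat.iter (S m) ainv (b (Nat.iter (S m) a t))) (D (S m)) (D m)).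
  { intros m. replace (D m) with (Nat.iter (S m) ainv (a al0)).
    apply CJ; auto using nice_iter, iter_inv.
    unfold in_I; lra. unfold D. rewrite iter_succ_r, IA. auto. }
  assert (COdn : forall m t, g (Nat.iter (S m) ainv (b (Nat.iter (S m) a t))) = Nat.iter (S m) ainv (b (Nat.iter (S m) a (g t)))).
  { intros m. apply (Hcom (fun t => Nat.iter (S m) ainv (b (Nat.iter (S m) a t)))).
    exists (S m); right. intros t. rewrite iter_inv; auto. }
  assert (Hfix : forall l, 0 < l < r -> a l <= l -> False).
  { intros l Hl Hle. assert (a l <> l) by (apply Asupp; auto).
    specialize (Aup l ltac:(unfold in_I; lra)). lra. }
  assert (UB : forall q, q < r -> exists K, q < U K).
  { intros q Hq. apply NNPP; intro Hn.
    assert (Hle : forall K, U K <= q).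
    { intros K. destruct (Rle_lt_dec (U K) q); auto. exfalso; apply Hn; eauto. }
    destruct (completeness (fun y => exists K, y = U K)) as (l & Hub & Hlub).
    { exists q. intros y (K & ->). auto. }
    { exists (U 0%nat). eauto. }
    assert (Hl1 : al0 <= l) by (apply Hub; exists 0%nat; auto).
    assert (Hl2 : l <= q) by (apply Hlub; intros y (K & ->); auto).
    assert (HlI : in_I r l) by (unfold in_I; lra).
    assert (Hil : in_I r (ainv l)) by (apply Ni; auto).
    assert (l <= ainv l).
    { apply Hlub. intros y (K & ->).
      destruct (Rle_lt_dec (U K) (ainv l)) as [|Hlt]; auto. exfalso.
      assert (a (ainv l) < a (U K)) by (apply Na; auto; specialize (UI K); unfold in_I; lra).
      rewrite AI in H. assert (U (S K) <= l) by (apply Hub; eauto).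
      change (U (S K)) with (a (U K)) in H0. lra. }
    apply (Hfix l). lra.
    assert (a l <= a (ainv l)) by (apply (nice_le r a); auto).
    rewrite AI in H0. auto. }
  assert (DB : forall q, 0 < q -> exists K, D K <= q).
  { intros q Hq. apply NNPP; intro Hn.
    assert (Hle : forall K, q < D K).
    { intros K. destruct (Rle_lt_dec (D K) q); auto. exfalso; apply Hn; eauto. }
    destruct (completeness (fun y => exists K, y = - D K)) as (l' & Hub & Hlub).
    { exists (- q). intros y (K & ->). specialize (Hle K). lra. }
    { exists (- D 0%nat). eauto. }
    set (l := - l').
    assert (Hl1 : l <= al0).
    { assert (- D 0%nat <= l') by (apply Hub; eauto). unfold l. change (D 0%nat) with al0 in H. lra. }
    assert (Hl2 : q <= l).
    { assert (l' <= - q). { apply Hlub. intros y (K & ->). specialize (Hle K). lra. }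
      unfold l; lra. }
    assert (HlI : in_I r l) by (unfold in_I; lra).
    assert (Hlow : forall K, l <= D K).
    { intros K. assert (- D K <= l') by (apply Hub; eauto). unfold l; lra. }
    apply (Hfix l). lra.
    assert (l' <= - a l).
    { apply Hlub. intros y (K & ->).
      assert (a l <= a (D (S K))).
      { apply (nice_le r a); auto. specialize (DI (S K)); unfold in_I; lra. }
      change (D (S K)) with (ainv (D K)) in H. rewrite AI in H. lra. }
    unfold l in *; lra. }
  intros q Hq.
  destruct (Rle_lt_dec al0 q) as [Hge|Hlt].
  - destruct (UB q ltac:(lra)) as (K & HK).
    destruct (cross_up U q K Hge HK) as (m & Hm1 & Hm2).
    destruct (Req_dec (U m) q) as [E|E].
    + subst q. destruct m as [|m'].
      * apply (boundary r g n x lam c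
          (fun t => Nat.iter 1 ainv (b (Nat.iter 1 a t)))
          (fun t => Nat.iter 0 a (b (Nat.iter 0 ainv t))) (D 1%nat) (U 0%nat) (U 1%nat)); auto.
        all: first [exact (CLdn 0%nat) | exact (COdn 0%nat) | exact (COup 0%nat) | exact (CLup 0%nat)].
      * apply (boundary r g n x lam c
          (fun t => Nat.iter m' a (b (Nat.iter m' ainv t)))
          (fun t => Nat.iter (S m') a (b (Nat.iter (S m') ainv t))) (U m') (U (S m')) (U (S (S m')))); auto.
        all: first [exact (COup m') | exact (COup (S m')) | exact (CLup m') | exact (CLup (S m'))].
    + apply (local r g n x lam c _ (U m) (U (S m)) HP Hb (CLup m) (COup m)). lra.
  - destruct (DB q ltac:(lra)) as (K & HK).
    destruct (cross_dn D q K Hlt HK) as (m & Hm1 & Hm2).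
    destruct (Req_dec (D (S m)) q) as [E|E].
    + subst q.
      apply (boundary r g n x lam c
          (fun t => Nat.iter (S (S m)) ainv (b (Nat.iter (S (S m)) a t)))
          (fun t => Nat.iter (S m) ainv (b (Nat.iter (S m) a t))) (D (S (S m))) (D (S m)) (D m)); auto.
      all: first [exact (COdn (S m)) | exact (COdn m) | exact (CLdn (S m)) | exact (CLdn m)].
    + apply (local r g n x lam c _ (D (S m)) (D m) HP Hb (CLdn m) (COdn m)). lra.
Qed.

Theorem lemma4p7 (r : R) (Lam A : R -> Prop) (G : (R -> R) -> Prop)
  (a b : R -> R) (alpha0 : R) :
  admissible r Lam A ->
  subgroupV r G ->
  (forall f, (G f /\ inF r posR allR f) <-> inF r Lam A f) ->
  Fup r Lam A a ->
  supp_eq a (fun t => 0 < t < r) ->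
  0 < alpha0 < r -> A alpha0 ->
  Fup r Lam A b ->
  supp_eq b (fun t => alpha0 < t < a alpha0) ->
  (forall g, (G g /\ commute g a) <-> (inF r Lam A g /\ commute g a)) /\
  (forall g, (G g /\ (forall h, conj_set a b h -> commute g h)) <->
             (inF r Lam A g /\ (forall h, conj_set a b h -> commute g h))).
Proof.
  intros Hadm HG H3 Hfa Hsa Ha0 HA0 Hfb Hsb.
  assert (HL : forall l, Lam l -> 0 < l) by (destruct Hadm as (_ & (HLp & _) & _); exact HLp).
  assert (Na : Nice r a) by (apply (nice_of_F r Lam A); auto).
  assert (Nb : Nice r b) by (apply (nice_of_F r Lam A); auto).
  assert (Ga : G a) by (apply H3; exact (proj1 Hfa)).
  destruct HG as (HG1 & HGid & HGc & HGi).
  assert (Key : forall g, G g -> (forall n x lam c, PW r g n x lam c -> bij_I r g -> forall q, 0 < q < r -> LC g q) ->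
     inF r Lam A g).
  { intros g Gg K. apply H3. split; auto. destruct (HG1 g Gg) as (Hb & Hpw). split. split; auto.
    destruct (pw_of r posR allR g (fun l h => h) Hpw) as (n & x & lam & c & HP).
    apply cont_of.
    - intros q Hq. apply (rc_pw r g n x lam c q HP Hq).
    - apply (K n x lam c HP Hb). }
  assert (a0 : a 0 = 0).
  { destruct (Req_dec (a 0) 0) as [|E]; auto. apply Hsa in E. lra. }
  assert (b0 : b 0 = 0).
  { destruct (Req_dec (b 0) 0) as [|E]; auto. apply Hsb in E. lra. }
  split.
  - intros g; split.
    + intros (Gg & Hc). split; auto. apply Key; auto.
      intros n x lam c HP Hb q Hq.
      apply (local r g n x lam c a 0 r HP Hb); auto.
      split; [|split; [|split; [|split; [|split]]]]; auto; try lra.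
      all: first [apply Hfa | intros t Ht; apply Hsa].
    + intros (HF & Hc). split; auto. apply H3 in HF. tauto.
  - intros g; split.
    + intros (Gg & Hc). split; auto. apply Key; auto.
      intros n x lam c HP Hb.
      destruct (HGi a Ga) as (ainv & _ & IA & AI).
      assert (Ni : Nice r ainv).
      { apply (nice_inv r a); auto. apply (proj1 (proj1 (proj1 Hfa))). }
      apply (part2 r a ainv b alpha0 g n x lam c); auto.
      all: first [apply Hfa | apply Hfb].
    + intros (HF & Hc). split; auto. apply H3 in HF. tauto.
Qed.
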